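(* For $i=1,2$ let $G_i\subseteq U(n_i)$ be a finite unitary reflection group and $E_i\subseteq\mathbb C^{n_i}$ a good bounded $G_i$-invariant domain. Then $E_1\times E_2\subseteq\mathbb C^{n_1}\times\mathbb C^{n_2}$ is a good $(G_1\times G_2)$-invariant domain, where $G_1\times G_2=\{g_1\oplus g_2: g_i\in G_i\}\subseteq U(n_1+n_2)$.
   Context: A reflection is an element of $U(n)$ of finite order whose fixed point set is a hyperplane (its reflecting hyperplane); a finite unitary reflection group $G$ is a finite subgroup of $U(n)$ generated by reflections; $\mathcal R_G$ is its set of reflecting hyperplanes. A bounded $G$-invariant domain $E$ is good if for every $Y\in\mathcal R_G$, $Y\cap E$ is connected and $Y\cap bE=b_Y(Y\cap E)$, where $b_Y$ denotes the topological boundary relative to $Y$. *)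

(* Defs.v *)
From HB Require Import structures.
From mathcomp Require Import all_boot all_order all_algebra.
From mathcomp Require Import all_classical all_reals all_analysis.
From mathcomp Require Import complex.
Import Order.TTheory GRing.Theory Num.Theory numFieldNormedType.Exports.

Set Implicit Arguments.
Unset Strict Implicit.
Unset Printing Implicit Defensive.

Local Open Scope ring_scope.
Local Open Scope classical_set_scope.

(* The complex numbers are R[i] for a real field R : realType; equip R[i]  *)
(* with its canonical (modulus) normed/topological structure, so that       *)
(* C^n = 'cV[R[i]]_n carries the product (= usual Euclidean) topology.      *)
HB.instance Definition _ (R : realType) := NormedModule.copy R[i] (R[i]^o).

Section Defs.
Variable R : realType.
Local Notation C := R[i].

Definition unitary (n : nat) (M : 'M[C]_n) : Prop :=
  M *m (map_mx (fun z : C => z^*) M)^T = 1%:M.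

Definition fixset (n : nat) (g : 'M[C]_n) : set 'cV[C]_n :=
  [set v | g *m v = v].

Definition hyperplane (n : nat) (Y : set 'cV[C]_n) : Prop :=
  exists a : 'rV[C]_n, a != 0 /\ Y = [set v | a *m v = 0].

Definition reflection (n : nat) (g : 'M[C]_n) : Prop :=
  [/\ unitary g,
      (exists k : nat, (0 < k)%N /\ iter k (mulmx g) 1%:M = 1%:M)
    & hyperplane (fixset g)].

Definition finite_reflection_group (n : nat) (G : set 'M[C]_n) : Prop :=
  [/\ finite_set G,
      G 1%:M /\
      (forall g h, G g -> G h -> G (g *m h)),
      (forall g, G g -> exists h, [/\ G h, g *m h = 1%:M & h *m g = 1%:M]),
      (forall g, G g -> unitary g)
    & (forall g, G g -> exists s : seq 'M[C]_n,
          (forall r, r \in s -> G r /\ reflection r) /\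
          g = foldr mulmx 1%:M s)].

Definition reflecting_hyperplanes (n : nat) (G : set 'M[C]_n)
  : set (set 'cV[C]_n) :=
  [set Y | exists g, [/\ G g, reflection g & Y = fixset g]].

Definition domain (n : nat) (E : set 'cV[C]_n) : Prop :=
  [/\ open E, connected E & E !=set0].

Definition bounded_cn (n : nat) (E : set 'cV[C]_n) : Prop :=
  exists M : C, forall v, E v -> forall i, `|v i 0| <= M.

Definition invariant (n : nat) (G : set 'M[C]_n) (E : set 'cV[C]_n) : Prop :=
  forall g v, G g -> E v -> E (g *m v).

Definition tboundary (n : nat) (A : set 'cV[C]_n) : set 'cV[C]_n :=
  [set x | forall U, nbhs x U -> U `&` A !=set0 /\ U `&` ~` A !=set0].

Definition rel_boundary (n : nat) (Y A : set 'cV[C]_n) : set 'cV[C]_n :=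
  [set x | Y x /\ forall U, nbhs x U ->
       U `&` Y `&` A !=set0 /\ U `&` Y `&` ~` A !=set0].

Definition good (n : nat) (G : set 'M[C]_n) (E : set 'cV[C]_n) : Prop :=
  forall Y, reflecting_hyperplanes G Y ->
    connected (Y `&` E) /\ Y `&` tboundary E = rel_boundary Y (Y `&` E).

Definition good_domain (n : nat) (G : set 'M[C]_n) (E : set 'cV[C]_n) : Prop :=
  [/\ domain E, bounded_cn E, invariant G E & good G E].

(* C^{n1} x C^{n2} identified with C^{n1+n2} via column stacking. *)
Definition prod_set (n1 n2 : nat) (E1 : set 'cV[C]_n1) (E2 : set 'cV[C]_n2)
  : set 'cV[C]_(n1 + n2) :=
  [set w | exists u v, [/\ E1 u, E2 v & w = col_mx u v]].

Definition prod_group (n1 n2 : nat) (G1 : set 'M[C]_n1) (G2 : set 'M[C]_n2)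
  : set 'M[C]_(n1 + n2) :=
  [set g | exists g1 g2, [/\ G1 g1, G2 g2 & g = block_mx g1 0 0 g2]].

End Defs.

(* Main.v *)
Set Warnings "-all".
Require Import Defs.
From HB Require Import structures.
From mathcomp Require Import all_boot all_order all_algebra.
From mathcomp Require Import all_classical all_reals all_analysis.
From mathcomp Require Import complex.
Import Order.TTheory GRing.Theory Num.Theory numFieldNormedType.Exports.
Local Open Scope ring_scope.
Local Open Scope classical_set_scope.
Set Implicit Arguments.
Unset Strict Implicit.
Section S.
Variable R : realType.
Local Notation C := R[i].

Lemma ball_col n1 n2 (a c : 'cV[C]_n1) (b d : 'cV[C]_n2) e :
  ball (col_mx a b) e (col_mx c d) <-> ball a e c /\ ball b e d.
Proof.
split.
- move=> [e0 H]; split; split=> // i j.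
  + by have := H (lshift n2 i) j; rewrite !col_mxEu.
  + by have := H (rshift n1 i) j; rewrite !col_mxEd.
- move=> [[e0 H1] [_ H2]]; split=> // i j.
  rewrite !mxE; case: splitP => k _; [exact: H1|exact: H2].
Qed.

Lemma ball_colE n1 n2 (x y : 'cV[C]_(n1 + n2)) e :
  ball x e y <-> ball (usubmx x) e (usubmx y) /\ ball (dsubmx x) e (dsubmx y).
Proof. by rewrite -{1}(vsubmxK x) -{1}(vsubmxK y); exact: ball_col. Qed.

Lemma pos_min {e1 e2 : C} : 0 < e1 -> 0 < e2 ->
  exists2 e, 0 < e & e <= e1 /\ e <= e2.
Proof.
move=> h1 h2.
have [le|le] := real_leP (gtr0_real h1) (gtr0_real h2).
- by exists e1 => //; split.
- by exists e2 => //; split => //; exact: ltW.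
Qed.

Lemma nbhs_cV n (x : 'cV[C]_n) (U : set 'cV[C]_n) :
  nbhs x U <-> exists2 e : C, 0 < e & ball x e `<=` U.
Proof. by rewrite nbhs_ballP. Qed.

Lemma cont_ball m n (f : 'cV[C]_m -> 'cV[C]_n) :
  (forall x y e, ball x e y -> ball (f x) e (f y)) -> continuous f.
Proof.
move=> H x; apply/(@cvg_ballP _ _ _ _ (nbhs_filter x)) => e e0.
apply/nbhs_cV; exists e => // y /H.
by [].
Qed.

Lemma ball_gt0' n (x y : 'cV[C]_n) e : ball x e y -> 0 < e.
Proof. by case. Qed.

Lemma cont_colL n1 n2 (a : 'cV[C]_n1) : continuous (fun v : 'cV[C]_n2 => col_mx a v).
Proof.
apply: cont_ball => x y e bxy; apply/ball_col; split => //.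
by apply: ballxx; case: bxy.
Qed.

Lemma cont_colR n1 n2 (b : 'cV[C]_n2) : continuous (fun u : 'cV[C]_n1 => col_mx u b).
Proof.
apply: cont_ball => x y e bxy; apply/ball_col; split => //.
by apply: ballxx; case: bxy.
Qed.

Lemma prod_connected n1 n2 (A : set 'cV[C]_n1) (B : set 'cV[C]_n2) :
  connected A -> connected B -> connected (prod_set A B).
Proof.
move=> cA cB.
case: (pselect (A !=set0)) => [[a0 Aa0]|nA]; last first.
  have -> : prod_set A B = set0.
    by apply/seteqP; split => // w [u [v [Au _ _]]]; apply: nA; exists u.
  exact: connected0.
case: (pselect (B !=set0)) => [[b0 Bb0]|nB]; last first.
  have -> : prod_set A B = set0.
    by apply/seteqP; split => // w [u [v [_ Bv _]]]; apply: nB; exists v.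
  exact: connected0.
have -> : prod_set A B = \bigcup_(a in A)
   ((fun v => col_mx a v) @` B `|` (fun u => col_mx u b0) @` A).
  apply/seteqP; split => w.
  - by move=> [u [v [Au Bv ->]]]; exists u => //; left; exists v.
  - move=> [a Aa [[v Bv <-]|[u Au <-]]].
    + by exists a, v.
    + by exists u, b0.
apply: bigcup_connected.
  by exists (col_mx a0 b0) => a Aa /=; right; exists a0.
move=> a Aa; apply: connectedU.
- by exists (col_mx a b0); split; [exists b0|exists a].
- apply: connected_continuous_connected => //.
  by apply: continuous_subspaceT; exact: cont_colL.
- apply: connected_continuous_connected => //.
  by apply: continuous_subspaceT; exact: cont_colR.
Qed.
Lemma prod_setE n1 n2 (A : set 'cV[C]_n1) (B : set 'cV[C]_n2) w :
  prod_set A B w <-> A (usubmx w) /\ B (dsubmx w).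
Proof.
split.
- by move=> [u [v [Au Bv ->]]]; rewrite col_mxKu col_mxKd.
- by move=> [Au Bv]; exists (usubmx w), (dsubmx w); rewrite vsubmxK.
Qed.

Lemma prod_setI n1 n2 (A C' : set 'cV[C]_n1) (B D : set 'cV[C]_n2) :
  prod_set A B `&` prod_set C' D = prod_set (A `&` C') (B `&` D).
Proof.
apply/seteqP; split => w.
- by move=> [/prod_setE[? ?] /prod_setE[? ?]]; apply/prod_setE.
- by move=> /prod_setE[[? ?] [? ?]]; split; apply/prod_setE.
Qed.

Lemma prod_setTT n1 n2 : prod_set [set: 'cV[C]_n1] [set: 'cV[C]_n2] = setT.
Proof. by apply/seteqP; split => w // _; apply/prod_setE. Qed.

Lemma open_prod n1 n2 (A : set 'cV[C]_n1) (B : set 'cV[C]_n2) :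
  open A -> open B -> open (prod_set A B).
Proof.
move=> oA oB; rewrite openE => w /prod_setE[Aw Bw].
have := oA _ Aw; have := oB _ Bw.
rewrite /interior => /nbhs_cV[e2 e20 sB] /nbhs_cV[e1 e10 sA].
have [e e0 [le1 le2]] := pos_min e10 e20.
apply/nbhs_cV; exists e => // z /ball_colE[b1 b2]; apply/prod_setE; split.
- by apply: sA; exact: le_ball b1.
- by apply: sB; exact: le_ball b2.
Qed.

Definition adh {n} (Y E : set 'cV[C]_n) (x : 'cV[C]_n) :=
  forall U, nbhs x U -> U `&` Y `&` E !=set0.

Lemma rb_char n (Y E : set 'cV[C]_n) x : open E ->
  (rel_boundary Y (Y `&` E) x <-> [/\ Y x, adh Y E x & ~ E x]).
Proof.
move=> oE; split.
- move=> [Yx H]; split => //.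
  + by move=> U /H [[z [[Uz Yz] [_ Ez]]] _]; exists z.
  + move=> Ex; have nE : nbhs x E by rewrite openE in oE; exact: oE.
    by have [_ [z [[Ez Yz] nz]]] := H _ nE; apply: nz.
- move=> [Yx ad nE]; split => // U xU; split.
  + by have [z [[Uz Yz] Ez]] := ad _ xU; exists z.
  + by exists x; split; [split => //; exact: nbhs_singleton|move=> [] ].
Qed.

Lemma tb_rb n (E : set 'cV[C]_n) x :
  tboundary E x <-> rel_boundary setT (setT `&` E) x.
Proof.
split.
- move=> H; split => // U /H [[z [Uz Ez]] [z' [Uz' Ez']]]; split.
  + by exists z.
  + by exists z'; split => // -[].
- move=> [_ H] U /H [[z [[Uz _] [_ Ez]]] [z' [[Uz' _] nz]]]; split.
  + by exists z.
  + by exists z'; split => // Ez'; apply: nz.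
Qed.

Lemma adh_prod n1 n2 (Y1 E1 : set 'cV[C]_n1) (Y2 E2 : set 'cV[C]_n2) x1 x2 :
  adh (prod_set Y1 Y2) (prod_set E1 E2) (col_mx x1 x2) <->
  adh Y1 E1 x1 /\ adh Y2 E2 x2.
Proof.
split.
- move=> H; split.
  + move=> U /nbhs_cV[e e0 sU].
    have [z [[bz /prod_setE[Y1z Y2z]] /prod_setE[E1z E2z]]] :=
      H _ (nbhsx_ballx (col_mx x1 x2) _ e0).
    exists (usubmx z); split => //; split => //; apply: sU.
    by move/ball_colE: bz; rewrite col_mxKu => -[].
  + move=> U /nbhs_cV[e e0 sU].
    have [z [[bz /prod_setE[Y1z Y2z]] /prod_setE[E1z E2z]]] :=
      H _ (nbhsx_ballx (col_mx x1 x2) _ e0).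
    exists (dsubmx z); split => //; split => //; apply: sU.
    by move/ball_colE: bz; rewrite col_mxKd => -[].
- move=> [H1 H2] U /nbhs_cV[e e0 sU].
  have [z1 [[b1 Y1z] E1z]] := H1 _ (nbhsx_ballx x1 _ e0).
  have [z2 [[b2 Y2z] E2z]] := H2 _ (nbhsx_ballx x2 _ e0).
  exists (col_mx z1 z2); split; [split|].
  + by apply: sU; apply/ball_col.
  + by apply/prod_setE; rewrite col_mxKu col_mxKd.
  + by apply/prod_setE; rewrite col_mxKu col_mxKd.
Qed.

Lemma adh_factor n (Y E : set 'cV[C]_n) x : open E ->
  Y `&` tboundary E = rel_boundary Y (Y `&` E) -> Y x ->
  (adh setT E x <-> adh Y E x).
Proof.
move=> oE HY Yx; split; last first.
  by move=> H U /H [z [[Uz _] Ez]]; exists z.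
move=> H.
case: (pselect (E x)) => Ex.
  by move=> U xU; exists x; split => //; split => //; exact: nbhs_singleton.
have : (Y `&` tboundary E) x by split => //; apply/tb_rb/rb_char.
by rewrite HY => /rb_char-/(_ oE) [].
Qed.

Lemma good_prod_bd n1 n2 (Y1 E1 : set 'cV[C]_n1) (Y2 E2 : set 'cV[C]_n2) :
  open E1 -> open E2 ->
  Y1 `&` tboundary E1 = rel_boundary Y1 (Y1 `&` E1) ->
  Y2 `&` tboundary E2 = rel_boundary Y2 (Y2 `&` E2) ->
  prod_set Y1 Y2 `&` tboundary (prod_set E1 E2) =
  rel_boundary (prod_set Y1 Y2) (prod_set Y1 Y2 `&` prod_set E1 E2).
Proof.
move=> o1 o2 H1 H2; have oP := open_prod o1 o2.
apply/seteqP; split => x.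
- move=> [Yx /tb_rb /rb_char-/(_ oP) [_ ad nE]]; apply/rb_char => //; split => //.
  move: ad Yx; rewrite -(vsubmxK x) -prod_setTT => /adh_prod [a1 a2] /prod_setE.
  rewrite col_mxKu col_mxKd => -[y1 y2].
  by apply/adh_prod; split; [exact/(adh_factor o1 H1 y1)|exact/(adh_factor o2 H2 y2)].
- move=> /rb_char-/(_ oP) [Yx ad nE]; split => //; apply/tb_rb/rb_char => //; split => //.
  move: ad Yx; rewrite -(vsubmxK x) -prod_setTT => /adh_prod [a1 a2] /prod_setE.
  rewrite col_mxKu col_mxKd => -[y1 y2].
  by apply/adh_prod; split; [exact/(adh_factor o1 H1 y1)|exact/(adh_factor o2 H2 y2)].
Qed.

Lemma tb_setT n (E : set 'cV[C]_n) :
  setT `&` tboundary E = rel_boundary setT (setT `&` E).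
Proof.
apply/seteqP; split => x.
- by move=> [_ H]; apply/tb_rb.
- by move=> H; split => //; apply/tb_rb.
Qed.
Definition blk n1 n2 (a : 'M[C]_n1) (b : 'M[C]_n2) : 'M[C]_(n1 + n2) :=
  block_mx a 0 0 b.

Lemma blkM n1 n2 (a c : 'M[C]_n1) (b d : 'M[C]_n2) :
  blk a b *m blk c d = blk (a *m c) (b *m d).
Proof. by rewrite /blk mulmx_block !mulmx0 !mul0mx !addr0 !add0r. Qed.

Lemma blk1 n1 n2 : blk (1%:M : 'M[C]_n1) (1%:M : 'M[C]_n2) = 1%:M.
Proof. by rewrite /blk scalar_mx_block. Qed.

Lemma blk_inj n1 n2 (a c : 'M[C]_n1) (b d : 'M[C]_n2) :
  blk a b = blk c d -> a = c /\ b = d.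
Proof. by move/eq_block_mx => [-> _ _ ->]. Qed.

Lemma map_conj0 m n : map_mx (fun z : C => z^*) (0 : 'M[C]_(m, n)) = 0.
Proof. by apply/matrixP => i j; rewrite !mxE conjC0. Qed.

Lemma map_conj1 n : map_mx (fun z : C => z^*) (1%:M : 'M[C]_n) = 1%:M.
Proof. by apply/matrixP => i j; rewrite !mxE; case: eqP; rewrite /= ?conjC0 ?conjC1. Qed.

Lemma blk_conjT n1 n2 (a : 'M[C]_n1) (b : 'M[C]_n2) :
  (map_mx (fun z : C => z^*) (blk a b))^T =
  blk (map_mx (fun z : C => z^*) a)^T (map_mx (fun z : C => z^*) b)^T.
Proof. by rewrite /blk map_block_mx tr_block_mx !map_conj0 !trmx0. Qed.

Lemma unitary_blk n1 n2 (a : 'M[C]_n1) (b : 'M[C]_n2) :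
  unitary a -> unitary b -> unitary (blk a b).
Proof. by rewrite /unitary blk_conjT blkM => -> ->; rewrite blk1. Qed.

Lemma unitary1 n : unitary (1%:M : 'M[C]_n).
Proof. by rewrite /unitary map_conj1 trmx1 mul1mx. Qed.

Lemma iter_blk n1 n2 (a : 'M[C]_n1) (b : 'M[C]_n2) k :
  iter k (mulmx (blk a b)) 1%:M = blk (iter k (mulmx a) 1%:M) (iter k (mulmx b) 1%:M).
Proof. by elim: k => [|k IH] /=; [rewrite blk1|rewrite IH blkM]. Qed.

Lemma iter1 n k : iter k (mulmx (1%:M : 'M[C]_n)) 1%:M = 1%:M.
Proof. by elim: k => [|k IH] //=; rewrite IH mul1mx. Qed.

Lemma foldr_cat_mx n (s t : seq 'M[C]_n) :
  foldr mulmx 1%:M (s ++ t) = foldr mulmx 1%:M s *m foldr mulmx 1%:M t.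
Proof. by elim: s => [|x s IH] /=; rewrite ?mul1mx // IH mulmxA. Qed.

Lemma foldr_blkL n1 n2 (s : seq 'M[C]_n1) :
  foldr mulmx 1%:M (map (fun r => blk r (1%:M : 'M[C]_n2)) s) = blk (foldr mulmx 1%:M s) 1%:M.
Proof. by elim: s => [|x s IH] /=; rewrite ?blk1 // IH blkM mul1mx. Qed.

Lemma foldr_blkR n1 n2 (s : seq 'M[C]_n2) :
  foldr mulmx 1%:M (map (fun r => blk (1%:M : 'M[C]_n1) r) s) = blk 1%:M (foldr mulmx 1%:M s).
Proof. by elim: s => [|x s IH] /=; rewrite ?blk1 // IH blkM mul1mx. Qed.

Lemma blk_col n1 n2 (a : 'M[C]_n1) (b : 'M[C]_n2) (u : 'cV[C]_n1) (v : 'cV[C]_n2) :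
  blk a b *m col_mx u v = col_mx (a *m u) (b *m v).
Proof. by rewrite /blk mul_block_col !mul0mx addr0 add0r. Qed.

Lemma fixset_blk n1 n2 (a : 'M[C]_n1) (b : 'M[C]_n2) :
  Defs.fixset (blk a b) = prod_set (Defs.fixset a) (Defs.fixset b).
Proof.
apply/seteqP; split => w; rewrite /Defs.fixset /=.
- rewrite -[w]vsubmxK blk_col => /eq_col_mx [h1 h2].
  by apply/prod_setE; rewrite col_mxKu col_mxKd.
- move/prod_setE => [h1 h2].
  by rewrite -[w]vsubmxK blk_col /= h1 h2.
Qed.

Lemma fixset1 n : Defs.fixset (1%:M : 'M[C]_n) = setT.
Proof. by apply/seteqP; split => w //= _; rewrite /Defs.fixset /= mul1mx. Qed.

Lemma fix_all n (g : 'M[C]_n) : (forall u : 'cV[C]_n, g *m u = u) -> g = 1%:M.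
Proof.
move=> H; apply/matrixP => i j.
have := congr1 (fun M : 'cV[C]_n => M i 0) (H (delta_mx j 0)).
by rewrite -colE !mxE /= andbT eq_sym.
Qed.

Lemma rV_solve n (a : 'rV[C]_n) : a != 0 -> exists u : 'cV[C]_n, a *m u = 1%:M.
Proof.
move=> a0.
have [j aj] : exists j, a 0 j != 0.
  apply/existsP; apply: contraR a0 => /existsPn H.
  by apply/eqP/matrixP => i k; rewrite !ord1 mxE; have := H k; rewrite negbK => /eqP.
exists ((a 0 j)^-1 *: delta_mx j 0); rewrite -scalemxAr -colE.
by apply/matrixP => i k; rewrite !ord1 !mxE mulVf.
Qed.
Lemma ker_row n1 n2 (a1 : 'rV[C]_n1) (a2 : 'rV[C]_n2) (w : 'cV[C]_(n1 + n2)) :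
  row_mx a1 a2 *m w = a1 *m usubmx w + a2 *m dsubmx w.
Proof. by rewrite -{1}[w]vsubmxK mul_row_col. Qed.

Lemma hyper_prodL n1 n2 (Y : set 'cV[C]_n1) :
  hyperplane Y -> hyperplane (prod_set Y [set: 'cV[C]_n2]).
Proof.
move=> [a [a0 ->]]; exists (row_mx a 0); split.
- by rewrite row_mx_eq0 negb_and a0.
- apply/seteqP; split => w.
  + by move/prod_setE => [h _]; rewrite /= ker_row mul0mx addr0.
  + by rewrite /= ker_row mul0mx addr0 => h; apply/prod_setE.
Qed.

Lemma hyper_prodR n1 n2 (Y : set 'cV[C]_n2) :
  hyperplane Y -> hyperplane (prod_set [set: 'cV[C]_n1] Y).
Proof.
move=> [a [a0 ->]]; exists (row_mx 0 a); split.
- by rewrite row_mx_eq0 negb_and a0 orbT.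
- apply/seteqP; split => w.
  + by move/prod_setE => [_ h]; rewrite /= ker_row mul0mx add0r.
  + by rewrite /= ker_row mul0mx add0r => h; apply/prod_setE.
Qed.

Lemma reflection_blkL n1 n2 (r : 'M[C]_n1) :
  reflection r -> reflection (blk r (1%:M : 'M[C]_n2)).
Proof.
move=> [u [k [k0 it]] h]; split.
- exact: unitary_blk u (unitary1 _).
- by exists k; split=> //; rewrite iter_blk it iter1 blk1.
- by rewrite fixset_blk fixset1; exact: hyper_prodL.
Qed.

Lemma reflection_blkR n1 n2 (r : 'M[C]_n2) :
  reflection r -> reflection (blk (1%:M : 'M[C]_n1) r).
Proof.
move=> [u [k [k0 it]] h]; split.
- exact: unitary_blk (unitary1 _) u.
- by exists k; split=> //; rewrite iter_blk it iter1 blk1.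
- by rewrite fixset_blk fixset1; exact: hyper_prodR.
Qed.

Lemma one_neq0_mx1 : (1%:M : 'M[C]_1) <> 0.
Proof.
move/matrixP/(_ 0 0); rewrite !mxE /= => /eqP; by rewrite oner_eq0.
Qed.

Lemma refl_blk_cases n1 n2 (g1 : 'M[C]_n1) (g2 : 'M[C]_n2) :
  unitary g1 -> unitary g2 -> reflection (blk g1 g2) ->
  (reflection g1 /\ g2 = 1%:M) \/ (g1 = 1%:M /\ reflection g2).
Proof.
move=> u1 u2 [_ [k [k0 it]] [a [a0 Ha]]].
move: it; rewrite iter_blk -blk1 => /blk_inj [it1 it2].
rewrite fixset_blk in Ha.
have [a1 [a2 ea]] : exists a1 a2, a = row_mx a1 a2.
  by exists (lsubmx a), (rsubmx a); rewrite hsubmxK.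
rewrite {}ea in a0 Ha.
have F1 (u : 'cV[C]_n1) : g1 *m u = u <-> a1 *m u = 0.
  have E : prod_set (Defs.fixset g1) (Defs.fixset g2) (col_mx u 0) =
           (row_mx a1 a2 *m col_mx u 0 = 0) by rewrite Ha.
  move: E; rewrite mul_row_col mulmx0 addr0 => <-; split.
  + by move=> h; apply/prod_setE; rewrite col_mxKu col_mxKd; split => //;
      rewrite /Defs.fixset /= mulmx0.
  + by move/prod_setE => [+ _]; rewrite col_mxKu.
have F2 (v : 'cV[C]_n2) : g2 *m v = v <-> a2 *m v = 0.
  have E : prod_set (Defs.fixset g1) (Defs.fixset g2) (col_mx 0 v) =
           (row_mx a1 a2 *m col_mx 0 v = 0) by rewrite Ha.
  move: E; rewrite mul_row_col mulmx0 add0r => <-; split.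
  + by move=> h; apply/prod_setE; rewrite col_mxKu col_mxKd; split => //;
      rewrite /Defs.fixset /= mulmx0.
  + by move/prod_setE => [_ +]; rewrite col_mxKd.
case: (eqVneq a1 0) => [a10|a1n0].
  right; have g11 : g1 = 1%:M by apply: fix_all => u; apply/F1; rewrite a10 mul0mx.
  have a2n0 : a2 != 0 by apply: contraNneq a0 => a20; rewrite a10 a20 row_mx0.
  split => //; split => //; first by exists k.
  exists a2; split => //; apply/seteqP; split => v; rewrite /Defs.fixset /=; by move/F2.
case: (eqVneq a2 0) => [a20|a2n0].
  left; have g21 : g2 = 1%:M by apply: fix_all => u; apply/F2; rewrite a20 mul0mx.
  split => //; split => //; first by exists k.
  exists a1; split => //; apply/seteqP; split => v; rewrite /Defs.fixset /=; by move/F1.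
exfalso.
have [u hu] := rV_solve a1n0; have [v hv] := rV_solve a2n0.
have : prod_set (Defs.fixset g1) (Defs.fixset g2) (col_mx u (- v)).
  by rewrite Ha /= mul_row_col mulmxN hu hv subrr.
move/prod_setE => [+ _]; rewrite col_mxKu /Defs.fixset /= => /F1 h.
by apply: one_neq0_mx1; rewrite -hu h.
Qed.
End S.

Unset Implicit Arguments.
Set Strict Implicit.

Theorem proposition4p5 (R : realType) (n1 n2 : nat)
  (G1 : set 'M[R[i]]_n1) (G2 : set 'M[R[i]]_n2)
  (E1 : set 'cV[R[i]]_n1) (E2 : set 'cV[R[i]]_n2) :
  finite_reflection_group G1 -> finite_reflection_group G2 ->
  good_domain G1 E1 -> good_domain G2 E2 ->
  finite_reflection_group (prod_group G1 G2) /\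
  good_domain (prod_group G1 G2) (prod_set E1 E2).
Proof.
move=> [fin1 [one1 mul1] inv1 un1 gen1] [fin2 [one2 mul2] inv2 un2 gen2].
move=> [dom1 bd1 i1 gd1] [dom2 bd2 i2 gd2].
case: dom1 => o1 c1 ne1; case: dom2 => o2 c2 ne2.
case: bd1 => M1 b1; case: bd2 => M2 b2.
have PG g : prod_group G1 G2 g <->
    exists g1 g2, [/\ G1 g1, G2 g2 & g = blk g1 g2] by [].
split.
- split.
  + have -> : prod_group G1 G2 = [set blk p.1 p.2 | p in G1 `*` G2].
      apply/seteqP; split => g.
      * by move/PG => [g1 [g2 [h1 h2 ->]]]; exists (g1, g2).
      * by move=> [ [g1 g2] [h1 h2] <-]; apply/PG; exists g1, g2.
    exact: finite_image (finite_setX fin1 fin2).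
  + split.
    * by apply/PG; exists 1%:M, 1%:M; rewrite blk1.
    * move=> g h /PG [g1 [g2 [h1 h2 ->]]] /PG [k1 [k2 [l1 l2 ->]]].
      by apply/PG; exists (g1 *m k1), (g2 *m k2); split; [exact: mul1|exact: mul2|exact: blkM].
  + move=> g /PG [g1 [g2 [h1 h2 ->]]].
    have [k1 [Gk1 e1 e1']] := inv1 _ h1; have [k2 [Gk2 e2 e2']] := inv2 _ h2.
    exists (blk k1 k2); split.
    * by apply/PG; exists k1, k2.
    * by rewrite blkM e1 e2 blk1.
    * by rewrite blkM e1' e2' blk1.
  + by move=> g /PG [g1 [g2 [h1 h2 ->]]]; apply: unitary_blk; [exact: un1|exact: un2].
  + move=> g /PG [g1 [g2 [h1 h2 ->]]].
    have [s1 [hs1 ->]] := gen1 _ h1; have [s2 [hs2 ->]] := gen2 _ h2.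
    exists (map (fun r => blk r 1%:M) s1 ++ map (fun r => blk 1%:M r) s2); split.
    * move=> r; rewrite mem_cat => /orP [/mapP [r1 r1s ->]|/mapP [r2 r2s ->]].
      - split; first by apply/PG; exists r1, 1%:M; split => //; exact: (hs1 _ r1s).1.
        exact: reflection_blkL (hs1 _ r1s).2.
      - split; first by apply/PG; exists 1%:M, r2; split => //; exact: (hs2 _ r2s).1.
        exact: reflection_blkR (hs2 _ r2s).2.
    * by rewrite foldr_cat_mx foldr_blkL foldr_blkR blkM mulmx1 mul1mx.
- split.
  + split.
    * exact: open_prod.
    * exact: prod_connected.
    * by case: ne1 => x1 e1x; case: ne2 => x2 e2x; exists (col_mx x1 x2), x1, x2.
  + exists (`|M1| + `|M2|) => w /prod_setE [h1 h2] i.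
    rewrite -[w]vsubmxK mxE; case: splitP => j _.
    * have le := b1 _ h1 j.
      have M0 : 0 <= M1 by apply: le_trans le.
      by apply: le_trans le _; rewrite ger0_norm // lerDl.
    * have le := b2 _ h2 j.
      have M0 : 0 <= M2 by apply: le_trans le.
      by apply: le_trans le _; rewrite (ger0_norm M0) lerDr.
  + move=> g v /PG [g1 [g2 [h1 h2 ->]]] /prod_setE [e1 e2]; apply/prod_setE.
    rewrite -[v]vsubmxK blk_col col_mxKu col_mxKd; split; [exact: i1|exact: i2].
  + move=> Y [g [/PG [g1 [g2 [h1 h2 ->]]] rg ->]].
    case: (refl_blk_cases (un1 _ h1) (un2 _ h2) rg) => [[r1 ->]|[-> r2]].
    * rewrite fixset_blk fixset1.
      have RY1 : reflecting_hyperplanes G1 (Defs.fixset g1) by exists g1.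
      have [cY bY] := gd1 _ RY1; split.
      - by rewrite prod_setI setTI; exact: prod_connected.
      - by apply: good_prod_bd => //; exact: tb_setT.
    * rewrite fixset_blk fixset1.
      have RY2 : reflecting_hyperplanes G2 (Defs.fixset g2) by exists g2.
      have [cY bY] := gd2 _ RY2; split.
      - by rewrite prod_setI setTI; exact: prod_connected.
      - by apply: good_prod_bd => //; exact: tb_setT.
Qed.
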